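(* Let $\Omega\subset\mathbb{R}^n$ be a bounded open set, let $f:\Omega\to\mathbb{R}$ be a bounded function, and let $\lambda>0$. Define the extensions $f^{-}_{\overline\Omega},f^{+}_{\overline\Omega}:\overline\Omega\to\mathbb{R}$ and $f^{-}_{\mathbb{R}^n},f^{+}_{\mathbb{R}^n}:\mathbb{R}^n\to\mathbb{R}$ by $f^{\pm}_{\overline\Omega}(x)=f(x)$ for $x\in\Omega$, $f^{-}_{\overline\Omega}(x)=\inf_\Omega f$ and $f^{+}_{\overline\Omega}(x)=\sup_\Omega f$ for $x\in\partial\Omega$; $f^{\pm}_{\mathbb{R}^n}(x)=f(x)$ for $x\in\Omega$, $f^{-}_{\mathbb{R}^n}(x)=\inf_\Omega f$ and $f^{+}_{\mathbb{R}^n}(x)=\sup_\Omega f$ for $x\in\mathbb{R}^n\setminus\Omega$. Then for every $x\in\overline\Omega$: $$M_{\lambda,\Omega}(f^{-}_{\overline\Omega})(x)=M_\lambda(f^{-}_{\mathbb{R}^n})(x),\qquad M^{\lambda}_{\Omega}(f^{+}_{\overline\Omega})(x)=M^{\lambda}(f^{+}_{\mathbb{R}^n})(x),$$ $$M^{\lambda}_{\Omega}(M_{\lambda,\Omega}(f^{-}_{\overline\Omega}))(x)=M^{\lambda}(M_{\lambda}(f^{-}_{\mathbb{R}^n}))(x),\qquad M_{\lambda,\Omega}(M^{\lambda}_{\Omega}(f^{+}_{\overline\Omega}))(x)=M_{\lambda}(M^{\lambda}(f^{+}_{\mathbb{R}^n}))(x),$$ and consequently $$C^l_{\lambda,\Omega}(f^{-}_{\overline\Omega})(x)=C^l_\lambda(f^{-}_{\mathbb{R}^n})(x),\qquad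 C^u_{\lambda,\Omega}(f^{+}_{\overline\Omega})(x)=C^u_\lambda(f^{+}_{\mathbb{R}^n})(x).$$ Moreover, with $O_f=\sup_\Omega f-\inf_\Omega f$: (i) If $x\in\Omega$ satisfies $\mathrm{dist}^2(x,\partial\Omega)>O_f/\lambda$ and $z_x\in\overline\Omega$ satisfies $M_{\lambda,\Omega}(f^{-}_{\overline\Omega})(x)=f^{-}_{\overline\Omega}(z_x)+\lambda|z_x-x|^2$ [respectively $M^{\lambda}_{\Omega}(f^{+}_{\overline\Omega})(x)=f^{+}_{\overline\Omega}(z_x)-\lambda|z_x-x|^2$], then $z_x\in\Omega$. (ii) If $x\in\Omega$ satisfies $\mathrm{dist}^2(x,\partial\Omega)>4O_f/\lambda$ and $z_x\in\overline\Omega$ satisfies $M^{\lambda}_{\Omega}(M_{\lambda,\Omega}(f^{-}_{\overline\Omega}))(x)=M_{\lambda,\Omega}(f^{-}_{\overline\Omega})(z_x)-\lambda|z_x-x|^2$ [respectively $M_{\lambda,\Omega}(M^{\lambda}_{\Omega}(f^{+}_{\overline\Omega}))(x)=M^{\lambda}_{\Omega}(f^{+}_{\overline\Omega})(z_x)+\lambda|z_x-x|^2$], then $z_x\in\Omega$, and any $y_x\in\overline\Omega$ with $M_{\lambda,\Omega}(f^{-}_{\overline\Omega})(z_x)=f^{-}_{\overline\Omega}(y_x)+\lambda|y_x-z_x|^2$ [respectively $M^{\lambda}_{\Omega}(f^{+}_{\overline\Omega})(z_x)=f^{+}_{\overline\Omega}(y_x)-\lambda|y_x-z_x|^2$] satisfies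 $y_x\in\Omega$.
   Context: For a bounded $g:\mathbb{R}^n\to\mathbb{R}$ and $\lambda>0$, the lower and upper Moreau envelopes are $M_\lambda(g)(x)=\inf_{y\in\mathbb{R}^n}\{g(y)+\lambda|y-x|^2\}$ and $M^\lambda(g)(x)=\sup_{y\in\mathbb{R}^n}\{g(y)-\lambda|y-x|^2\}$. For bounded $g:\overline\Omega\to\mathbb{R}$ and $x\in\overline\Omega$, $M_{\lambda,\Omega}(g)(x)=\inf_{y\in\overline\Omega}\{g(y)+\lambda|y-x|^2\}$ and $M^{\lambda}_{\Omega}(g)(x)=\sup_{y\in\overline\Omega}\{g(y)-\lambda|y-x|^2\}$. $\mathrm{co}[h]$ denotes the convex envelope (largest convex function below $h$). The compensated convex transforms are $C^l_\lambda(g)(x)=\mathrm{co}[g+\lambda|\cdot|^2](x)-\lambda|x|^2$ and $C^u_\lambda(g)(x)=\lambda|x|^2-\mathrm{co}[\lambda|\cdot|^2-g](x)$, and the local ones are $C^l_{\lambda,\Omega}(g)=M^{\lambda}_{\Omega}(M_{\lambda,\Omega}(g))$ and $C^u_{\lambda,\Omega}(g)=M_{\lambda,\Omega}(M^{\lambda}_{\Omega}(g))$ on $\overline\Omega$. $\mathrm{dist}(x,A)=\inf_{y\in A}|x-y|$. *)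

(* Defs.v *)
(* R^n is modelled as row vectors 'rV[R]_n with the
   product topology (equivalent to the Euclidean one); the Euclidean norm is
   written out explicitly. *)
From HB Require Import structures.
From mathcomp Require Import all_boot all_order all_algebra.
From mathcomp Require Import all_classical all_reals all_analysis.
Set Implicit Arguments. Unset Strict Implicit. Unset Printing Implicit Defensive.
Import Order.TTheory GRing.Theory Num.Theory.
Import numFieldNormedType.Exports.
Local Open Scope classical_set_scope.
Local Open Scope ring_scope.

Section Defs.
Variables (R : realType) (n : nat).
Notation V := 'rV[R]_n.

Definition sqn (v : V) : R := \sum_(i < n) (v ord0 i) ^+ 2.
Definition enorm (v : V) : R := Num.sqrt (sqn v).

Definition eucl_dist (x : V) (A : set V) : R := inf [set enorm (x - y) | y in A].

(* lower / upper Moreau envelopes with the infimum/supremum taken over A;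
   A = setT gives M_lambda, M^lambda; A = closure Omega gives the local ones *)
Definition Mlow (lam : R) (A : set V) (g : V -> R) (x : V) : R :=
  inf [set g y + lam * sqn (y - x) | y in A].
Definition Mup (lam : R) (A : set V) (g : V -> R) (x : V) : R :=
  sup [set g y - lam * sqn (y - x) | y in A].

Definition convex_fun (c : V -> R) : Prop :=
  forall (x y : V) (t : R), 0 <= t <= 1 ->
    c (t *: x + (1 - t) *: y) <= t * c x + (1 - t) * c y.
Definition co (h : V -> R) (x : V) : R :=
  sup [set c x | c in [set c : V -> R | convex_fun c /\ (forall y, c y <= h y)]].

Definition Cl (lam : R) (g : V -> R) (x : V) : R :=
  co (fun y => g y + lam * sqn y) x - lam * sqn x.
Definition Cu (lam : R) (g : V -> R) (x : V) : R :=
  lam * sqn x - co (fun y => lam * sqn y - g y) x.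
Definition Cl_loc (lam : R) (O : set V) (g : V -> R) : V -> R :=
  Mup lam (closure O) (Mlow lam (closure O) g).
Definition Cu_loc (lam : R) (O : set V) (g : V -> R) : V -> R :=
  Mlow lam (closure O) (Mup lam (closure O) g).

(* extensions of f outside Omega by inf_Omega f / sup_Omega f.  The same formula
   gives f^-_{closure Omega} (restricted to closure Omega) and f^-_{R^n}. *)
Definition ext_minus (O : set V) (f : V -> R) (x : V) : R :=
  if x \in O then f x else inf (f @` O).
Definition ext_plus (O : set V) (f : V -> R) (x : V) : R :=
  if x \in O then f x else sup (f @` O).

Definition osc (O : set V) (f : V -> R) : R := sup (f @` O) - inf (f @` O).

End Defs.

(* Main.v *)
Require Import Defs.
From HB Require Import structures.
From mathcomp Require Import all_boot all_order all_algebra.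
From mathcomp Require Import all_classical all_reals all_analysis.
From mathcomp Require Import ring lra.
Import Order.TTheory GRing.Theory Num.Theory.
Import numFieldNormedType.Exports.
Local Open Scope classical_set_scope.
Local Open Scope ring_scope.

Section Aux.
Variables (R : realType) (n : nat).
Notation V := 'rV[R]_n.
Implicit Types (g : V -> R) (A : set V).

Lemma sqn_ge0 (v : V) : 0 <= sqn v.
Proof. by apply: sumr_ge0 => i _; exact: sqr_ge0. Qed.

Lemma sqnB (v w : V) : sqn (v - w) = sqn (w - v).
Proof. by apply: eq_bigr => i _; rewrite !mxE -sqrrN opprB. Qed.

Lemma MlowN lam A g x : Mlow lam A (fun y => - g y) x = - Mup lam A g x.
Proof.
rewrite /Mlow /Mup /inf; congr (- sup _); rewrite image_comp.
by apply: eq_imagel => y _ /=; rewrite opprD opprK.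
Qed.

Lemma MupN lam A g x : Mup lam A (fun y => - g y) x = - Mlow lam A g x.
Proof.
rewrite -[in RHS](_ : (fun y => - - g y) = g); last by apply: funext => y; rewrite opprK.
by rewrite MlowN opprK.
Qed.

Lemma inf_le_mem (E : set R) b x : (forall y, E y -> b <= y) -> E x -> inf E <= x.
Proof. by move=> hb Ex; apply: ge_inf => //; exists b. Qed.

Lemma le_inf_lb (E : set R) b : E !=set0 -> (forall y, E y -> b <= y) -> b <= inf E.
Proof. by move=> ne hb; apply: lb_le_inf. Qed.

Lemma sup_ge_mem (E : set R) b x : (forall y, E y -> y <= b) -> E x -> x <= sup E.
Proof. by move=> hb Ex; apply: ub_le_sup => //; exists b. Qed.

Lemma sup_le_ub (E : set R) b : E !=set0 -> (forall y, E y -> y <= b) -> sup E <= b.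
Proof. by move=> ne hb; apply: ge_sup. Qed.


Lemma Mlow_le lam A g x y b : 0 <= lam -> (forall z, A z -> b <= g z) -> A y ->
  Mlow lam A g x <= g y + lam * sqn (y - x).
Proof.
move=> l0 hb Ay; apply: (@inf_le_mem _ b); last by exists y.
move=> _ [z Az <-]; rewrite -[b]addr0; apply: lerD; first exact: hb.
by apply: mulr_ge0 => //; exact: sqn_ge0.
Qed.

Lemma Mlow_ge lam A g x b : A !=set0 ->
  (forall z, A z -> b <= g z + lam * sqn (z - x)) -> b <= Mlow lam A g x.
Proof.
move=> [y Ay] hb; apply: le_inf_lb; first by exists (g y + lam * sqn (y - x)), y.
by move=> _ [z Az <-]; exact: hb.
Qed.

Lemma Mup_ge lam A g x y b : 0 <= lam -> (forall z, A z -> g z <= b) -> A y ->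
  g y - lam * sqn (y - x) <= Mup lam A g x.
Proof.
move=> l0 hb Ay; apply: (@sup_ge_mem _ b); last by exists y.
move=> _ [z Az <-]; rewrite -[b]subr0; apply: lerB; first exact: hb.
by apply: mulr_ge0 => //; exact: sqn_ge0.
Qed.

Lemma Mup_le lam A g x b : A !=set0 ->
  (forall z, A z -> g z - lam * sqn (z - x) <= b) -> Mup lam A g x <= b.
Proof.
move=> [y Ay] hb; apply: sup_le_ub; first by exists (g y - lam * sqn (y - x)), y.
by move=> _ [z Az <-]; exact: hb.
Qed.

Definition dot (p v : V) : R := \sum_i p ord0 i * v ord0 i.

Lemma dot_affine (p a b x : V) t :
  dot p (t *: a + (1 - t) *: b - x) = t * dot p (a - x) + (1 - t) * dot p (b - x).
Proof.
rewrite /dot !mulr_sumr -big_split /=; apply: eq_bigr => i _; rewrite !mxE; ring.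
Qed.

Lemma dotDl (p q w : V) : dot (p + q) w = dot p w + dot q w.
Proof. by rewrite /dot -big_split; apply: eq_bigr => i _; rewrite !mxE mulrDl. Qed.

Lemma dotZl (p w : V) a : dot (a *: p) w = a * dot p w.
Proof. by rewrite /dot mulr_sumr; apply: eq_bigr => i _; rewrite !mxE mulrA. Qed.

Lemma dot_delta (i0 : 'I_n) (w : V) : dot (\row_j ((j == i0)%:R : R)) w = w ord0 i0.
Proof.
rewrite /dot (bigD1 i0) //= big1 ?addr0; first by rewrite mxE eqxx mul1r.
by move=> j /negbTE hj; rewrite mxE hj mul0r.
Qed.

Lemma dot0l (w : V) : dot 0 w = 0.
Proof. by rewrite /dot big1 // => i _; rewrite mxE mul0r. Qed.

Lemma subgrad (c : V -> R) (x : V) : convex_fun c ->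
  exists p, forall z, c x + dot p (z - x) <= c z.
Proof.
move=> cvx.
pose slice k (z : V) := forall i : 'I_n, (k <= i)%N -> z ord0 i = x ord0 i.
suff: forall k, (k <= n)%N -> exists p : V, (forall i : 'I_n, (k <= i)%N -> p ord0 i = 0) /\
  forall z, slice k z -> c x + dot p (z - x) <= c z.
  move=> /(_ n (leqnn n)) [p [_ hp]]; exists p => z; apply: hp => i.
  by rewrite leqNgt ltn_ord.
elim=> [_|k IH hk].
  exists 0; split=> [i _|z hz]; first by rewrite mxE.
  have -> : z = x by apply/rowP => i; exact: hz.
  by rewrite dot0l addr0.
have [p [hp0 hp]] := IH (ltnW hk).
pose i0 := Ordinal hk.
pose e : V := \row_j ((j == i0)%:R : R).
pose psi z := c z - dot p (z - x).
have key : forall a b s t, slice k (a - t *: e) -> slice k (b + s *: e) -> 0 < s -> 0 < t ->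
    (s + t) * c x <= s * psi a + t * psi b.
  move=> a b s t ha hb s0 t0.
  have st0 : s + t != 0 by rewrite lt0r_neq0 // addr_gt0.
  pose tau := s / (s + t).
  have e1 : (s + t) * tau = s by rewrite /tau; field.
  have e2 : (s + t) * (1 - tau) = t by rewrite /tau; field.
  have tau01 : 0 <= tau <= 1.
    apply/andP; split; first by rewrite divr_ge0 // ltW // addr_gt0.
    by rewrite ler_pdivrMr ?addr_gt0 // mul1r lerDl ltW.
  pose w := tau *: a + (1 - tau) *: b.
  have sw : slice k w.
    move=> i ki; have := ha i ki; have := hb i ki; rewrite /w !mxE => hbi hai.
    have z0 : tau * t - (1 - tau) * s = 0 by rewrite /tau; field.
    move: hai hbi; set E := (_ == _)%:R => hai hbi.
    have -> : a ord0 i = x ord0 i + t * E by rewrite -hai; ring.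
    have -> : b ord0 i = x ord0 i - s * E by rewrite -hbi; ring.
    transitivity (x ord0 i + E * (tau * t - (1 - tau) * s)); first ring.
    by rewrite z0 mulr0 addr0.
  have h1 := hp w sw.
  have h2 := cvx a b tau tau01.
  rewrite dot_affine in h1.
  have h3 : c x <= tau * psi a + (1 - tau) * psi b.
    rewrite /psi; move: h1 h2; rewrite -/w; lra.
  have := ler_wpM2l (ltW (addr_gt0 s0 t0)) h3.
  by rewrite mulrDr mulrA e1 mulrA e2.
pose L := [set r | exists v s, [/\ slice k (v + s *: e), 0 < s & r = (c x - psi v) / s]].
have ratio : forall a b s t, slice k (a - t *: e) -> slice k (b + s *: e) -> 0 < s -> 0 < t ->
    (c x - psi b) / s <= (psi a - c x) / t.
  move=> a b s t ha hb s0 t0; have := key a b s t ha hb s0 t0 => hk'.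
  rewrite ler_pdivrMr // mulrAC ler_pdivlMr //.
  move: hk'; nra.
have sx : forall t, slice k (x - t *: e + t *: e).
  by move=> t i _; rewrite subrK.
have Lne : L !=set0.
  exists ((c x - psi (x - e)) / 1), (x - e), 1; split => //.
  by rewrite scale1r subrK => i _.
have Lub : forall r, L r -> r <= (psi (x + e) - c x) / 1.
  move=> _ [v [s [hv s0 ->]]]; apply: ratio => //.
  by rewrite scale1r addrK => i _.
pose q := sup L.
have qA : forall a t, slice k (a - t *: e) -> 0 < t -> q * t <= psi a - c x.
  move=> a t ha t0; rewrite -ler_pdivlMr //; apply: sup_le_ub => //.
  by move=> _ [v [s [hv s0 ->]]]; apply: ratio.
have qB : forall b s, slice k (b + s *: e) -> 0 < s -> c x - psi b <= q * s.
  move=> b s hb s0; rewrite -ler_pdivrMr //; apply: (@sup_ge_mem _ ((psi (x + e) - c x) / 1)) => //.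
  by exists b, s.
exists (p + q *: e); split.
  move=> i ki; rewrite !mxE hp0 ?(ltnW ki) //.
  suff /negbTE -> : i != i0 by rewrite mulr0 addr0.
  by apply/eqP => eq; move: ki; rewrite eq /= ltnn.
move=> z hz.
pose t := z ord0 i0 - x ord0 i0.
have hs : slice k (z - t *: e).
  move=> i ki; rewrite !mxE; case: (eqVneq i i0) => [->|ne].
    by rewrite /t mulr1; ring.
  rewrite mulr0 subr0; apply: hz.
  by rewrite ltn_neqAle ki andbT; apply: contra ne => /eqP eq; apply/eqP/val_inj.
rewrite dotDl dotZl dot_delta !mxE -/t.
have : c x + q * t <= psi z.
  case: (ltgtP t 0) => [tn|tp|t0].
  - have := qB z (- t); rewrite scaleNr oppr_gt0 => /(_ hs tn); lra.
  - have := qA z t hs tp; lra.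
  - move: hs; rewrite t0 scale0r subr0 => /hp; rewrite /psi; lra.
rewrite /psi; lra.
Qed.


Lemma sqn0 : sqn (0 : V) = 0.
Proof. by rewrite /sqn big1 // => i _; rewrite mxE expr0n. Qed.

Lemma quad_affine (a b y : V) t :
  sqn (t *: a + (1 - t) *: b) - sqn (y - (t *: a + (1 - t) *: b)) =
  t * (sqn a - sqn (y - a)) + (1 - t) * (sqn b - sqn (y - b)).
Proof.
rewrite /sqn -!sumrB !mulr_sumr -big_split /=; apply: eq_bigr => i _; rewrite !mxE; ring.
Qed.

Lemma quad_shift (x y z : V) :
  sqn (z - y) - sqn (y - x) = sqn z - 2 * dot y (z - x) - sqn x.
Proof.
rewrite /sqn /dot -!sumrB mulr_sumr -!sumrB; apply: eq_bigr => i _; rewrite !mxE; ring.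
Qed.

Lemma Cl_MM lam g x : 0 < lam -> (exists B, forall y, `|g y| <= B) ->
  Cl lam g x = Mup lam setT (Mlow lam setT g) x.
Proof.
move=> l0 [B hB].
have l0' := ltW l0.
have gl y : - B <= g y by have := hB y; rewrite ler_norml => /andP[].
have gu y : g y <= B by have := hB y; rewrite ler_norml => /andP[].
have T0 : [set: V] !=set0 by exists 0.
pose G := Mlow lam setT g.
have Gle y : G y <= g y.
  by have := @Mlow_le lam setT g y y (- B) l0' (fun z _ => gl z) I; rewrite subrr sqn0 mulr0 addr0.
have Gle' z y : G z <= g y + lam * sqn (y - z) by apply: (@Mlow_le _ _ _ _ _ (- B)).
have Gu y : G y <= B by apply: le_trans (Gle y) (gu y).
have Mle y : Mup lam setT G y <= g y.
  apply: Mup_le => // z _; have := Gle' z y; rewrite sqnB; lra.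
have Mge y z : G z - lam * sqn (z - y) <= Mup lam setT G y.
  by apply: (@Mup_ge _ _ _ _ _ B).
pose phi y := Mup lam setT G y + lam * sqn y.
pose h := fun y => g y + lam * sqn y.
have phiC : convex_fun phi /\ (forall y, phi y <= h y).
  split; last by move=> y; rewrite /phi /h lerD2r.
  move=> a b t /andP[t0 t1]; rewrite /phi.
  set w := t *: a + (1 - t) *: b.
  suff : Mup lam setT G w <= t * phi a + (1 - t) * phi b - lam * sqn w.
    rewrite /phi; lra.
  apply: Mup_le => // y _.
  have qa := quad_affine a b y t; rewrite -/w in qa.
  have ha := Mge a y; have hb := Mge b y.
  have t1' : 0 <= 1 - t by rewrite subr_ge0.
  have := ler_wpM2l t0 ha; have := ler_wpM2l t1' hb.
  rewrite /phi; move: qa; nra.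
rewrite /Cl; suff -> : co (fun y => g y + lam * sqn y) x = phi x by rewrite /phi addrK.
rewrite -/h /co; apply/eqP; rewrite eq_le; apply/andP; split.
  apply: sup_le_ub; first by exists (phi x), phi.
  move=> _ [c [cvx ch] <-].
  have [p hp] := @subgrad c x cvx.
  pose y := (2 * lam)^-1 *: p.
  have := Mge x y; suff : c x - lam * sqn x <= G y - lam * sqn (y - x) by rewrite /phi; lra.
  suff : c x - lam * sqn x + lam * sqn (y - x) <= G y by lra.
  apply: Mlow_ge => // z _.
  have qs := quad_shift x y z.
  have dy : 2 * lam * dot y (z - x) = dot p (z - x).
    by rewrite /y dotZl mulrA mulfV ?mul1r // mulf_neq0 // gt_eqF.
  have := hp z; have := ch z; rewrite /h.
  have -> : sqn (z - y) = sqn (y - x) + sqn z - 2 * dot y (z - x) - sqn x by lra.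
  move: dy; nra.
apply: (@sup_ge_mem _ (h x)); last by exists phi.
by move=> _ [c [_ ch] <-]; exact: ch.
Qed.


Lemma Cu_MM lam g x : 0 < lam -> (exists B, forall y, `|g y| <= B) ->
  Cu lam g x = Mlow lam setT (Mup lam setT g) x.
Proof.
move=> l0 [B hB].
have e1 : (fun y => lam * sqn y - g y) = (fun y => (fun z => - g z) y + lam * sqn y).
  by apply: funext => y /=; rewrite addrC.
have e2 : Mlow lam setT (fun z => - g z) = (fun y => - Mup lam setT g y).
  by apply: funext => y; rewrite MlowN.
have bN : exists B, forall y, `|(fun z => - g z) y| <= B by exists B => y; rewrite normrN.
have := @Cl_MM lam (fun z => - g z) x l0 bN.
rewrite /Cl /Cu e1 e2 MupN => h.
have -> : co (fun y => - g y + lam * sqn y) x = lam * sqn x - Mlow lam [set: V] (Mup lam [set: V] g) x.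
  by move: h; lra.
by rewrite opprB addrC subrK.
Qed.

Lemma ball_R (t s e : R) : ball t e s <-> `|t - s| < e.
Proof. by rewrite -ball_normE. Qed.

Lemma segment_boundary (Om : set V) x y : open Om -> closure Om x -> ~ closure Om y ->
  exists b, [/\ closure Om b, ~ Om b & sqn (b - x) <= sqn (y - x)].
Proof.
move=> oOm cx ncy.
pose p t : V := x + t *: (y - x).
have pc : continuous p by move=> t; apply: cvgD; [exact: cvg_cst|apply: cvgZl; exact: cvg_id].
pose T := [set t : R | (0 <= t <= 1) /\ closure Om (p t)].
have T0 : T 0 by split; [rewrite lexx ler01|rewrite /p scale0r addr0].
have Tub : forall t, T t -> t <= 1 by move=> t [/andP[]].
have hT : has_sup T by split; [exists 0|exists 1 => t /Tub].
pose ts := sup T.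
have ts0 : 0 <= ts by apply: (@sup_ge_mem _ 1).
have ts1 : ts <= 1 by apply: sup_le_ub => //; exists 0.
have near_ts : forall P, nbhs (p ts) P -> exists t, T t /\ P (p t).
  move=> P /pc /nbhs_ballP [e e0 he].
  have [t Tt lt] := sup_adherent e0 hT; rewrite -/ts in lt.
  exists t; split => //; apply: he; rewrite ball_R.
  have : t <= ts by apply: (@sup_ge_mem _ 1).
  move=> tle; rewrite ger0_norm ?subr_ge0 //; lra.
have cts : closure Om (p ts).
  have : closure (closure Om) (p ts).
    move=> P /near_ts [t [[_ ct] Pt]]; by exists (p t).
  by rewrite -(closure_id _).1 //; exact: closed_closure.
have nts : ~ Om (p ts).
  move=> Ots.
  have /pc /nbhs_ballP [e e0 he] : nbhs (p ts) Om by apply: oOm.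
  have lt1 : ts < 1.
    rewrite lt_neqAle ts1 andbT; apply/negP => /eqP e1; apply: ncy.
    apply: subset_closure; move: Ots; rewrite /p e1 scale1r.
    by rewrite addrC subrK.
  pose t' := Num.min (ts + e / 2) 1.
  have ht' : ts < t'.
    rewrite /t' lt_min lt1 andbT; rewrite ltrDl; exact: divr_gt0.
  have Tt' : T t'.
    split.
      apply/andP; split; first by apply: le_trans ts0 (ltW ht').
      by rewrite /t' ge_min lexx orbT.
    apply: subset_closure; apply: he; rewrite ball_R.
    have : t' <= ts + e / 2 by rewrite /t' ge_min lexx.
    rewrite ltr0_norm ?subr_lt0 //; lra.
  have : t' <= ts by apply: (@sup_ge_mem _ 1).
  by rewrite leNgt ht'.
exists (p ts); split => //.
have -> : p ts - x = ts *: (y - x) by rewrite /p addrC addKr.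
rewrite /sqn; apply: ler_sum => i _; rewrite mxE exprMn.
rewrite -[X in _ <= X]mul1r; apply: ler_wpM2r; first exact: sqr_ge0.
rewrite expr2 -[1]mulr1; apply: ler_pM => //.
Qed.


Lemma Mlow_ext lam A g1 g2 x : (forall z, A z -> g1 z = g2 z) ->
  Mlow lam A g1 x = Mlow lam A g2 x.
Proof. by move=> h; rewrite /Mlow; congr inf; apply: eq_imagel => z Az; rewrite h. Qed.

Lemma Mup_ext lam A g1 g2 x : (forall z, A z -> g1 z = g2 z) ->
  Mup lam A g1 x = Mup lam A g2 x.
Proof. by move=> h; rewrite /Mup; congr sup; apply: eq_imagel => z Az; rewrite h. Qed.

Lemma sqn_tri2 (a b : V) : sqn (a + b) <= 2 * sqn a + 2 * sqn b.
Proof.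
rewrite /sqn !mulr_sumr -big_split /=; apply: ler_sum => i _; rewrite !mxE.
have := sqr_ge0 (a ord0 i - b ord0 i); nra.
Qed.

Lemma enorm_sqr (v : V) : enorm v ^+ 2 = sqn v.
Proof. by rewrite /enorm sqr_sqrtr // sqn_ge0. Qed.

Lemma dist_le (x z : V) (A : set V) : A z -> eucl_dist x A ^+ 2 <= sqn (z - x).
Proof.
move=> Az.
have e0 : forall r, [set enorm (x - y) | y in A] r -> 0 <= r.
  by move=> _ [y _ <-]; exact: sqrtr_ge0.
have d0 : 0 <= eucl_dist x A by apply: le_inf_lb => //; exists (enorm (x - z)), z.
have d1 : eucl_dist x A <= enorm (x - z) by apply: (@inf_le_mem _ 0) => //; exists z.
rewrite sqnB -enorm_sqr !expr2; apply: ler_pM => //.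
Qed.


Section Minus.
Variables (Om : set V) (f : V -> R) (lam : R).
Hypotheses (oOm : open Om) (fb : exists M, forall x, Om x -> `|f x| <= M) (l0 : 0 < lam).
Hypothesis (Omne : Om !=set0).

Let m := inf (f @` Om).
Let S := sup (f @` Om).
Let g := ext_minus Om f.
Let cl := closure Om.

Let fb' : exists M, forall x, Om x -> - M <= f x <= M.
Proof. by case: fb => M hM; exists M => x /hM; rewrite ler_norml. Qed.

Lemma m_le y : Om y -> m <= f y.
Proof.
case: fb' => M hM Oy; apply: (@inf_le_mem _ (- M)); last by exists y.
by move=> _ [z Oz <-]; have /andP[] := hM z Oz.
Qed.

Lemma S_ge y : Om y -> f y <= S.
Proof.
case: fb' => M hM Oy; apply: (@sup_ge_mem _ M); last by exists y.
by move=> _ [z Oz <-]; have /andP[] := hM z Oz.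
Qed.

Lemma mS : m <= S.
Proof. by case: Omne => y Oy; apply: le_trans (m_le _ Oy) (S_ge _ Oy). Qed.

Lemma gIn y : Om y -> g y = f y.
Proof. by move=> Oy; rewrite /g /ext_minus mem_set. Qed.

Lemma gOut y : ~ Om y -> g y = m.
Proof. by move=> Oy; rewrite /g /ext_minus memNset. Qed.

Lemma g_ge y : m <= g y.
Proof. by case: (pselect (Om y)) => Oy; [rewrite gIn //; exact: m_le|rewrite gOut]. Qed.

Lemma g_le y : g y <= S.
Proof. by case: (pselect (Om y)) => Oy; [rewrite gIn //; exact: S_ge|rewrite gOut //; exact: mS]. Qed.

Lemma g_bnd : exists B, forall y, `|g y| <= B.
Proof.
exists (Num.max `|m| `|S|) => y; rewrite ler_norml.
have h1 : - `|m| <= m by rewrite lerNl -normrN ler_norm.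
have h2 := ler_norm S.
have h3 : `|m| <= Num.max `|m| `|S| by rewrite le_max lexx.
have h4 : `|S| <= Num.max `|m| `|S| by rewrite le_max lexx orbT.
have := g_ge y; have := g_le y.
move: h3 h4; set B := Num.max _ _ => h3 h4 a b; apply/andP; split; lra.
Qed.

Let l0' := ltW l0.

Lemma sub_cl : Om `<=` cl.
Proof. exact: subset_closure. Qed.

Lemma cl_ne x : cl x -> cl !=set0.
Proof. by exists x. Qed.

Lemma part1a x : cl x -> Mlow lam cl g x = Mlow lam setT g x.
Proof.
move=> cx; apply/eqP; rewrite eq_le; apply/andP; split.
  apply: Mlow_ge; first by exists x.
  move=> z _; case: (pselect (cl z)) => cz.
    by apply: (@Mlow_le _ _ _ _ _ m) => // w _; exact: g_ge.
  have [b [cb nb hb]] := @segment_boundary Om x z oOm cx cz.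
  apply: le_trans (@Mlow_le lam cl g x b m l0' (fun w _ => g_ge w) cb) _.
  rewrite gOut // gOut; last by move=> /sub_cl.
  by rewrite lerD2l ler_wpM2l.
apply: Mlow_ge; first by exists x.
by move=> z cz; apply: (@Mlow_le _ _ _ _ _ m) => // w _; exact: g_ge.
Qed.

Let G := Mlow lam setT g.

Lemma G_ge y : m <= G y.
Proof.
apply: Mlow_ge; first by exists y.
move=> z _; rewrite -[m]addr0; apply: lerD; first exact: g_ge.
by apply: mulr_ge0 => //; exact: sqn_ge0.
Qed.

Lemma G_le_g y : G y <= g y.
Proof.
have := @Mlow_le lam setT g y y m l0' (fun z _ => g_ge z) I.
by rewrite subrr sqn0 mulr0 addr0.
Qed.

Lemma G_out y : ~ Om y -> G y = m.
Proof. by move=> Oy; apply/eqP; rewrite eq_le G_ge andbT -(gOut _ Oy) G_le_g. Qed.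

Lemma G_le y : G y <= S.
Proof. exact: le_trans (G_le_g y) (g_le y). Qed.

Lemma part1c x : cl x ->
  Mup lam cl (Mlow lam cl g) x = Mup lam setT (Mlow lam setT g) x.
Proof.
move=> cx; rewrite (@Mup_ext _ _ _ G); last by move=> z cz; rewrite part1a.
apply/eqP; rewrite eq_le; apply/andP; split.
  apply: Mup_le; first by exists x.
  by move=> z _; apply: (@Mup_ge _ _ _ _ _ S) => // w _; exact: G_le.
apply: Mup_le; first by exists x.
move=> z _; case: (pselect (cl z)) => cz.
  by apply: (@Mup_ge _ _ _ _ _ S) => // w _; exact: G_le.
have [b [cb nb hb]] := @segment_boundary Om x z oOm cx cz.
apply: le_trans _ (@Mup_ge lam cl G x b S l0' (fun w _ => G_le w) cb).
have -> : Mlow lam setT g z = m by apply: G_out => /sub_cl.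
rewrite G_out //.
by rewrite lerD2l lerN2 ler_wpM2l.
Qed.

Lemma part1e x : cl x -> Cl_loc lam Om g x = Cl lam g x.
Proof. by move=> cx; rewrite /Cl_loc part1c // (Cl_MM _ _ _ l0 g_bnd). Qed.

Lemma part_i x z : Om x -> osc Om f / lam < (eucl_dist x (cl `\` Om)) ^+ 2 ->
  cl z -> Mlow lam cl g x = g z + lam * sqn (z - x) -> Om z.
Proof.
move=> Ox hd cz he; apply: contrapT => nz.
have hd' := dist_le x _ _ (conj cz nz : (cl `\` Om) z).
have h1 : Mlow lam cl g x <= g x.
  have := @Mlow_le lam cl g x x m l0' (fun w _ => g_ge w) (sub_cl _ Ox).
  by rewrite subrr sqn0 mulr0 addr0.
move: h1; rewrite he gOut // gIn // => h1.
have := S_ge _ Ox; rewrite /osc -/m -/S in hd.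
move: hd; rewrite ltr_pdivrMr // => hd.
have := ler_wpM2l l0' hd'; move: h1; nra.
Qed.

Lemma Gc_ge y : m <= Mlow lam cl g y.
Proof.
apply: Mlow_ge; first by case: Omne => w Ow; exists w; exact: sub_cl.
move=> z _; rewrite -[m]addr0; apply: lerD; first exact: g_ge.
by apply: mulr_ge0 => //; exact: sqn_ge0.
Qed.

Lemma Gc_le_g y : cl y -> Mlow lam cl g y <= g y.
Proof.
move=> cy; have := @Mlow_le lam cl g y y m l0' (fun z _ => g_ge z) cy.
by rewrite subrr sqn0 mulr0 addr0.
Qed.

Lemma part_ii x z : Om x -> 4 * osc Om f / lam < (eucl_dist x (cl `\` Om)) ^+ 2 ->
  cl z -> Mup lam cl (Mlow lam cl g) x = Mlow lam cl g z - lam * sqn (z - x) ->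
  Om z /\ (forall y, cl y -> Mlow lam cl g z = g y + lam * sqn (y - z) -> Om y).
Proof.
move=> Ox hd cz he.
rewrite /osc -/m -/S ltr_pdivrMr // in hd.
have hM : Mlow lam cl g x <= Mup lam cl (Mlow lam cl g) x.
  have := @Mup_ge lam cl (Mlow lam cl g) x x S l0'
    (fun w cw => le_trans (Gc_le_g _ cw) (g_le w)) (sub_cl _ Ox).
  by rewrite subrr sqn0 mulr0 subr0.
have hm := Gc_ge x.
have oz : Om z.
  apply: contrapT => nz.
  have hd' := dist_le x _ _ (conj cz nz : (cl `\` Om) z).
  have := Gc_le_g _ cz; rewrite gOut // => h2.
  have := ler_wpM2l l0' hd'; have := mS; move: he hM hm h2 hd; nra.
split => // y cy hy; apply: contrapT => ny.
have hd' := dist_le x _ _ (conj cy ny : (cl `\` Om) y).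
have := sqn_tri2 (y - z) (z - x); rewrite addrA subrK => ht.
have := Gc_le_g _ cz; rewrite gIn // => h2.
have := S_ge _ oz => h3.
move: hy; rewrite gOut // => hy.
have := ler_wpM2l l0' (le_trans hd' ht); move: he hM hm h2 h3 hy hd; nra.
Qed.

Lemma minus_all :
 [/\ forall x, cl x -> [/\ Mlow lam cl g x = Mlow lam setT g x,
       Mup lam cl (Mlow lam cl g) x = Mup lam setT (Mlow lam setT g) x &
       Cl_loc lam Om g x = Cl lam g x],
  forall x z, Om x -> osc Om f / lam < (eucl_dist x (cl `\` Om)) ^+ 2 ->
    cl z -> Mlow lam cl g x = g z + lam * sqn (z - x) -> Om z,
  forall x z, Om x -> 4 * osc Om f / lam < (eucl_dist x (cl `\` Om)) ^+ 2 ->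
  cl z -> Mup lam cl (Mlow lam cl g) x = Mlow lam cl g z - lam * sqn (z - x) ->
  Om z /\ (forall y, cl y -> Mlow lam cl g z = g y + lam * sqn (y - z) -> Om y)
  & exists B, forall y, `|g y| <= B].
Proof.
split; [move=> x cx; split|exact: part_i|exact: part_ii|exact: g_bnd].
- exact: part1a.
- exact: part1c.
- exact: part1e.
Qed.

End Minus.

Lemma ext_plusN (Om : set V) f :
  ext_plus Om f = (fun y => - ext_minus Om (fun z => - f z) y).
Proof.
apply: funext => y; rewrite /ext_plus /ext_minus; case: ifP => _; first by rewrite opprK.
rewrite /inf opprK image_comp; congr sup; apply: eq_imagel => z _ /=; by rewrite opprK.
Qed.

Lemma oscN (Om : set V) f : osc Om (fun z => - f z) = osc Om f.
Proof.
rewrite /osc /inf !opprK.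
have -> : -%R @` [set - f z | z in Om] = f @` Om.
  by rewrite image_comp; apply: eq_imagel => z _ /=; rewrite opprK.
have -> : [set - f z | z in Om] = -%R @` (f @` Om) by rewrite image_comp.
by rewrite addrC.
Qed.

End Aux.

Theorem theorem3p1 (R : realType) (n : nat) (Om : set 'rV[R]_n)
    (f : 'rV[R]_n -> R) (lam : R) :
  open Om ->
  (exists M : R, forall x, Om x -> enorm x <= M) ->
  (exists M : R, forall x, Om x -> `|f x| <= M) ->
  0 < lam ->
  [/\
   (* the identities on closure Om *)
   forall x : 'rV[R]_n, closure Om x ->
     [/\ Mlow lam (closure Om) (ext_minus Om f) x = Mlow lam setT (ext_minus Om f) x,
         Mup lam (closure Om) (ext_plus Om f) x = Mup lam setT (ext_plus Om f) x,
         Mup lam (closure Om) (Mlow lam (closure Om) (ext_minus Om f)) x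
           = Mup lam setT (Mlow lam setT (ext_minus Om f)) x,
         Mlow lam (closure Om) (Mup lam (closure Om) (ext_plus Om f)) x
           = Mlow lam setT (Mup lam setT (ext_plus Om f)) x &
         (Cl_loc lam Om (ext_minus Om f) x = Cl lam (ext_minus Om f) x /\
         Cu_loc lam Om (ext_plus Om f) x = Cu lam (ext_plus Om f) x)],
   (* (i), lower case *)
   forall x z : 'rV[R]_n, Om x -> osc Om f / lam < (eucl_dist x (closure Om `\` Om)) ^+ 2 ->
     closure Om z ->
     Mlow lam (closure Om) (ext_minus Om f) x
       = ext_minus Om f z + lam * sqn (z - x) ->
     Om z,
   (* (i), upper case *)
   forall x z : 'rV[R]_n, Om x -> osc Om f / lam < (eucl_dist x (closure Om `\` Om)) ^+ 2 ->
     closure Om z ->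
     Mup lam (closure Om) (ext_plus Om f) x
       = ext_plus Om f z - lam * sqn (z - x) ->
     Om z,
   (* (ii), lower case *)
   forall x z : 'rV[R]_n, Om x -> 4 * osc Om f / lam < (eucl_dist x (closure Om `\` Om)) ^+ 2 ->
     closure Om z ->
     Mup lam (closure Om) (Mlow lam (closure Om) (ext_minus Om f)) x
       = Mlow lam (closure Om) (ext_minus Om f) z - lam * sqn (z - x) ->
     Om z /\
     (forall y : 'rV[R]_n, closure Om y ->
        Mlow lam (closure Om) (ext_minus Om f) z
          = ext_minus Om f y + lam * sqn (y - z) -> Om y) &
   (* (ii), upper case *)
   forall x z : 'rV[R]_n, Om x -> 4 * osc Om f / lam < (eucl_dist x (closure Om `\` Om)) ^+ 2 ->
     closure Om z ->
     Mlow lam (closure Om) (Mup lam (closure Om) (ext_plus Om f)) x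
       = Mup lam (closure Om) (ext_plus Om f) z + lam * sqn (z - x) ->
     Om z /\
     (forall y : 'rV[R]_n, closure Om y ->
        Mup lam (closure Om) (ext_plus Om f) z
          = ext_plus Om f y - lam * sqn (y - z) -> Om y)].
Proof.
move=> oOm _ fb l0.
have fbN : exists M, forall x, Om x -> `|(fun z => - f z) x| <= M.
  by case: fb => M hM; exists M => x /hM; rewrite normrN.
have ne_cl : forall x, closure Om x -> Om !=set0.
  by move=> x cx; have [y [Oy _]] := cx setT filterT; exists y.
have ne_O : forall x, Om x -> Om !=set0 by move=> x Ox; exists x.
set gm := ext_minus Om f.
set gn := ext_minus Om (fun z => - f z).
have ep : ext_plus Om f = (fun y => - gn y) by rewrite ext_plusN.
have eMup : forall A, Mup lam A (ext_plus Om f) = (fun y => - Mlow lam A gn y).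
  by move=> A; rewrite ep; apply: funext => y; rewrite MupN.
rewrite !eMup.
split.
- move=> x cx.
  have [h1 _ _ _] := @minus_all _ _ Om f lam oOm fb l0 (ne_cl x cx).
  have [h1n _ _ [Bn hBn]] := @minus_all _ _ Om (fun z => - f z) lam oOm fbN l0 (ne_cl x cx).
  have [a1 a2 a3] := h1 x cx; have [b1 b2 b3] := h1n x cx.
  split => //.
  + by rewrite b1.
  + by rewrite !MlowN b2.
  + split => //.
    rewrite /Cu_loc eMup (@Cu_MM _ _ lam _ x l0); last first.
      by exists Bn => y; rewrite ep normrN.
    by rewrite eMup !MlowN b2.
- move=> x z Ox hd cz he.
  by have [_ h _ _] := @minus_all _ _ Om f lam oOm fb l0 (ne_O x Ox); exact: h he.
- move=> x z Ox hd cz he.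
  have [_ h _ _] := @minus_all _ _ Om (fun z => - f z) lam oOm fbN l0 (ne_O x Ox).
  apply: (h x z Ox); rewrite ?oscN //.
  by move: he; rewrite ep => /eqP; rewrite -opprD eqr_opp => /eqP.
- move=> x z Ox hd cz he.
  by have [_ _ h _] := @minus_all _ _ Om f lam oOm fb l0 (ne_O x Ox); exact: h he.
- move=> x z Ox hd cz he.
  have [_ _ h _] := @minus_all _ _ Om (fun z => - f z) lam oOm fbN l0 (ne_O x Ox).
  move: he; rewrite MlowN => he.
  have he' : Mup lam (closure Om) (Mlow lam (closure Om) gn) x =
    Mlow lam (closure Om) gn z - lam * sqn (z - x) by lra.
  have [oz hy] := h x z Ox ltac:(by rewrite oscN) cz he'.
  split => // y cy; rewrite ep /= => e; apply: hy => //. rewrite -/gn; lra.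
Qed.
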